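(* Let $k\ge1$ and let $p=(p_1,\dots,p_k)$ be non-principal ultrafilters on $\mathbb N$ with $\{n: n\equiv j \pmod k\}\in p_j$ for each $j$. For a sequence $i=(i_j)_{j\ge1}$ of integers with $i_j\equiv j\pmod k$, put $\alpha_j(i)=\{i_j,i_j+k,\dots,i_{j+k}-k\}$ and $\alpha_\beta(i)=\bigcup_{j\in\beta}\alpha_j(i)$ for $\beta\in\mathscr F_\emptyset$. Let $X$ be a compact metric space and $f:\mathscr F_\emptyset\to X$ an $\mathcal S_k$-sequence. Define $\tilde f_p:\mathscr F_\emptyset\to X$ by $$\tilde f_p(\beta)=\operatorname*{p_1\text{-}lim}_{i_1}\ \operatorname*{p_2\text{-}lim}_{i_2}\cdots\operatorname*{p_k\text{-}lim}_{i_k}\ \operatorname*{p_1\text{-}lim}_{i_{k+1}}\ \operatorname*{p_2\text{-}lim}_{i_{k+2}}\cdots f(\alpha_\beta(i)),$$ where the limit in $i_m$ is taken along $p_{j}$ with $j\in\{1,\dots,k\}$, $j\equiv m\pmod k$, and the iterated limits are over the finitely many indices $i_m$ on which $f(\alpha_\beta(i))$ depends. Then $\tilde f_p$ is an asymptotic $\mathcal S_k$-subsequence of $f$.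
   Context: $\mathscr F$ is the family of finite non-empty subsets of $\mathbb N=\{1,2,\dots\}$, $\mathscr F_\emptyset=\mathscr F\cup\{\emptyset\}$. For $k\ge0$, $\mathcal S_k\subset\mathscr F$ is the family of $\alpha\in\mathscr F$ such that for every $i\in\alpha$, either $i=\max\alpha$ or there is $j\in\alpha$ with $i<j\le i+k$. An $\mathcal S_k$-sequence in $X$ is a map $f:\mathscr F_\emptyset\to X$ (intended to be evaluated on $\mathcal S_k$). Given pairwise disjoint $\alpha_1,\alpha_2,\dots\in\mathscr F$, let $\alpha_\beta=\bigcup_{i\in\beta}\alpha_i$ ($\alpha_\emptyset=\emptyset$). If $l\ge0$ and $\beta\mapsto\alpha_\beta$ maps $\mathcal S_l$ into $\mathcal S_k$, then $\beta\mapsto f(\alpha_\beta)$ ($\beta\in\mathscr F_\emptyset$) is an $\mathcal S_l$-subsequence of the $\mathcal S_k$-sequence $f$. For $X$ compact metric, an asymptotic $\mathcal S_l$-subsequence of $f$ is a map $\mathscr F_\emptyset\to X$ that is the pointwise limit of a sequence of $\mathcal S_l$-subsequences of $f$. For an ultrafilter $q$ on $\mathbb N$ and a map $x:\mathbb N\to X$, $\operatorname{q\text{-}lim}_n x(n)$ is the unique $y\in X$ such that $\{n: x(n)\in V\}\in q$ for every neighbourhood $V$ of $y$. *)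

(* Defs.v *)
From Stdlib Require Import Reals ClassicalEpsilon.
From Stdlib Require Import List.
From mathcomp Require Import all_boot.
Set Implicit Arguments. Unset Strict Implicit. Unset Printing Implicit Defensive.

Definition open_set (X : Metric_Space) (U : Base X -> Prop) : Prop :=
  forall x, U x -> exists eps : R, Rlt 0 eps /\ forall z, Rlt (dist X x z) eps -> U z.

Definition compact_space (X : Metric_Space) : Prop :=
  forall (I : Type) (U : I -> Base X -> Prop),
    (forall i, open_set (U i)) -> (forall x, exists i, U i x) ->
    exists l : list I, forall x, exists i, List.In i l /\ U i x.

(* Ultrafilters on N (as predicates on subsets of nat; non-principal ones
   never contain {0}, so they are exactly the non-principal ultrafilters on N). *)
Definition ultrafilter (U : (nat -> Prop) -> Prop) : Prop :=
  U (fun _ => True) /\ ~ U (fun _ => False) /\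
  (forall A B : nat -> Prop, (forall n, A n -> B n) -> U A -> U B) /\
  (forall A B : nat -> Prop, U A -> U B -> U (fun n => A n /\ B n)) /\
  (forall A : nat -> Prop, U A \/ U (fun n => ~ A n)).

Definition nonprincipal_ultrafilter (U : (nat -> Prop) -> Prop) : Prop :=
  ultrafilter U /\ forall m : nat, ~ U (fun n => n = m).

Definition is_qlim (X : Metric_Space) (q : (nat -> Prop) -> Prop)
  (x : nat -> Base X) (y : Base X) : Prop :=
  forall V : Base X -> Prop,
    (exists eps : R, Rlt 0 eps /\ forall z, Rlt (dist X y z) eps -> V z) ->
    q (fun n => V (x n)).

(* q-lim_n x(n): the (unique, when it exists) q-limit, chosen by epsilon. *)
Definition qlim (X : Metric_Space) (q : (nat -> Prop) -> Prop) (x : nat -> Base X)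
  : Base X := epsilon (inhabits (x 0%N)) (is_qlim q x).

(* Finite subsets of N = {1,2,...} represented canonically as strictly
   increasing lists of positive naturals. *)
Definition isF0 (s : seq nat) : bool := sorted ltn s && all (fun x => 0 < x) s.
Definition isF (s : seq nat) : bool := isF0 s && (s != [::]).

Definition smax (s : seq nat) : nat := \max_(x <- s) x.

Definition canon (s : seq nat) : seq nat := [seq x <- iota 1 (smax s) | x \in s].

Definition Sk (l : nat) (a : seq nat) : bool :=
  isF a && all (fun i => (i == smax a) || has (fun j => (i < j) && (j <= i + l)) a) a.

Definition abeta (a : nat -> seq nat) (b : seq nat) : seq nat :=
  canon (flatten [seq a j | j <- b]).

Definition subseq_family (k l : nat) (a : nat -> seq nat) : Prop :=
  (forall j, 0 < j -> isF (a j)) /\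
  (forall j j', 0 < j -> 0 < j' -> j != j' -> all (fun x => x \notin a j') (a j)) /\
  (forall b, Sk l b -> Sk k (abeta a b)).

Definition asymptotic_subseq (X : Metric_Space) (k l : nat)
  (f : seq nat -> Base X) (h : seq nat -> Base X) : Prop :=
  exists A : nat -> nat -> seq nat,
    (forall n, subseq_family k l (A n)) /\
    forall b, isF0 b -> forall eps : R, Rlt 0 eps ->
      exists N, forall n, N <= n -> Rlt (dist X (f (abeta (A n) b)) (h b)) eps.

(* alpha_j(i) = {i_j, i_j + k, ..., i_{j+k} - k} *)
Definition alphaj (k : nat) (i : nat -> nat) (j : nat) : seq nat :=
  [seq x <- iota (i j) (i (j + k) - i j) | (x %% k == i j %% k) && (x + k <= i (j + k))].

Definition alphabeta (k : nat) (i : nat -> nat) (b : seq nat) : seq nat :=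
  abeta (alphaj k i) b.

(* index j in {1..k} with j = m mod k *)
Definition pidx (k m : nat) : nat := ((m.-1) %% k).+1.

Definition upd (i : nat -> nat) (m n : nat) : nat -> nat :=
  fun j => if j == m then n else i j.

(* iterated limit over indices m, m+1, ..., m+r-1 (outermost first),
   index t taken along p_(pidx k t) *)
Fixpoint iterlim (X : Metric_Space) (k : nat) (p : nat -> (nat -> Prop) -> Prop)
  (r m : nat) (F : (nat -> nat) -> Base X) (i : nat -> nat) : Base X :=
  match r with
  | 0 => F i
  | r'.+1 => qlim (p (pidx k m)) (fun n => iterlim k p r' m.+1 F (upd i m n))
  end.

(* tilde f_p(beta): iterated limit over i_1, ..., i_{max beta + k}
   (f(alpha_beta(i)) only depends on these indices) *)
Definition ftilde (X : Metric_Space) (k : nat) (p : nat -> (nat -> Prop) -> Prop)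
  (f : seq nat -> Base X) (b : seq nat) : Base X :=
  iterlim k p (smax b + k) 1 (fun i => f (alphabeta k i b)) (fun _ => 0).

(* Main.v *)
Require Import Defs.
From Stdlib Require Import Reals ClassicalEpsilon List Classical FunctionalExtensionality Lra.
From mathcomp Require Import all_boot zify.
Set Implicit Arguments. Unset Strict Implicit.


Section Filt.
Variable q : (nat -> Prop) -> Prop.
Hypothesis hq : ultrafilter q.

Lemma uf_mono (A B : nat -> Prop) : (forall n, A n -> B n) -> q A -> q B.
Proof. by case: hq => _ [_ [h _]]; apply: h. Qed.
Lemma uf_and (A B : nat -> Prop) : q A -> q B -> q (fun n => A n /\ B n).
Proof. by case: hq => _ [_ [_ [h _]]]; apply: h. Qed.
Lemma uf_dich (A : nat -> Prop) : q A \/ q (fun n => ~ A n).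
Proof. by case: hq => _ [_ [_ [_ h]]]; apply: h. Qed.
Lemma uf_T : q (fun _ => True). Proof. by case: hq. Qed.
Lemma uf_nonempty (A : nat -> Prop) : q A -> exists n, A n.
Proof.
move=> hA; apply: NNPP => hn; case: hq => _ [hF _]; apply: hF.
by apply: uf_mono hA => n An; apply: hn; exists n.
Qed.
Lemma uf_list (T : Type) (l : list T) (P : T -> nat -> Prop) :
  (forall x, List.In x l -> q (P x)) -> q (fun n => forall x, List.In x l -> P x n).
Proof.
elim: l => [|a l IH] h.
  by apply: uf_mono uf_T => n _ x [].
have := uf_and (h a (or_introl erefl)) (IH (fun x hx => h x (or_intror hx))).
apply: uf_mono => n [h1 h2] x [<-|hx] //; exact: h2.
Qed.
Lemma uf_gt (hnp : forall m, ~ q (fun n => n = m)) L : q (fun n => L < n).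
Proof.
have hne : forall m, q (fun n => n <> m).
  by move=> m; case: (uf_dich (fun n => n = m)) => // /hnp.
elim: L => [|L IH].
  by apply: uf_mono (hne 0) => n; case: n.
apply: uf_mono (uf_and IH (hne L.+1)) => n [h1 h2].
rewrite ltn_neqAle h1 andbT; apply/eqP => e; apply: h2; by rewrite e.
Qed.

Variable X : Metric_Space.

Lemma qlim_exists (hX : compact_space X) (x : nat -> Base X) : exists y, is_qlim q x y.
Proof.
apply: NNPP => hno.
have hb : forall y, exists e : R, Rlt 0 e /\ ~ q (fun n => Rlt (dist X y (x n)) e).
  move=> y; apply: NNPP => hy; apply: hno; exists y => V [e [he hV]].
  case: (uf_dich (fun n => Rlt (dist X y (x n)) e)).
    by apply: uf_mono => n /hV.
  move=> hc; exfalso; apply: hy; exists e; split => // hq'.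
  case: hq => _ [hF _]; apply: hF.
  by apply: uf_mono (uf_and hq' hc) => n [].
pose e (y : Base X) := epsilon (inhabits R1) (fun e : R => Rlt 0 e /\ ~ q (fun n => Rlt (dist X y (x n)) e)).
have he : forall y, Rlt 0 (e y) /\ ~ q (fun n => Rlt (dist X y (x n)) (e y)).
  by move=> y; apply: (epsilon_spec (inhabits R1) _ (hb y)).
have [l hl] : exists l : list (Base X), forall z, exists y, List.In y l /\ Rlt (dist X y z) (e y).
  apply: hX.
  2: by move=> z; exists z; have [_ ->] := dist_refl X z z; [exact: (proj1 (he z))|].
  move=> y z hz; exists (Rminus (e y) (dist X y z)); split; first lra.
  move=> w hw; have := dist_tri X y w z; lra.
have : q (fun n => forall y, List.In y l -> ~ Rlt (dist X y (x n)) (e y)).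
  apply: uf_list => y _.
  by case: (uf_dich (fun n => Rlt (dist X y (x n)) (e y))) => // /(proj2 (he y)).
move=> hq'; have [n hn] := uf_nonempty hq'.
by have [y [hy1 hy2]] := hl (x n); exact: hn y hy1 hy2.
Qed.

Lemma qlim_spec (hX : compact_space X) (x : nat -> Base X) : is_qlim q x (qlim q x).
Proof. by rewrite /qlim; apply: epsilon_spec; apply: qlim_exists. Qed.

Lemma qlim_const (c : Base X) : qlim q (fun _ => c) = c.
Proof.
have hc : is_qlim q (fun _ => c) c.
  move=> V [e [he hV]]; apply: uf_mono uf_T => n _; apply: hV.
  by have [_ ->] := dist_refl X c c.
have := epsilon_spec (inhabits c) _ (ex_intro _ c hc).
rewrite -/(qlim q (fun _ => c)); set y := qlim _ _ => hy.
apply: NNPP => hne.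
have hd : Rlt 0 (dist X y c).
  have := dist_pos X y c; have [h1 _] := dist_refl X y c.
  case/Rge_le/Rle_lt_or_eq_dec => // h; exfalso; apply: hne; exact: h1 (esym h).
have := hy (fun z => Rlt (dist X y z) (dist X y c)) (ex_intro _ _ (conj hd (fun z h => h))).
move=> h; case: hq => _ [hF _]; apply: hF; apply: uf_mono h => n; lra.
Qed.
End Filt.


Section Core.
Variable k : nat.
Hypothesis hk : 0 < k.
Variable p : nat -> (nat -> Prop) -> Prop.
Hypothesis hp : forall j, 1 <= j <= k -> nonprincipal_ultrafilter (p j).
Hypothesis hres : forall j, 1 <= j <= k -> p j (fun n => n %% k = j %% k).
Variable X : Metric_Space.
Hypothesis hX : compact_space X.

Lemma pidx_rng m : 1 <= pidx k m <= k.
Proof. rewrite /pidx. apply/andP; split=> //. exact: ltn_pmod. Qed.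

Lemma pidx_mod m : 0 < m -> pidx k m %% k = m %% k.
Proof.
case: m => // m _. rewrite /pidx. change (((m %% k).+1) %% k = m.+1 %% k). rewrite -(addn1 (m %% k)) -(addn1 m). exact: modnDml.
Qed.

Lemma hpu m : ultrafilter (p (pidx k m)).
Proof. exact: (proj1 (hp (pidx_rng m))). Qed.

Lemma iterlim_const t m (F : (nat -> nat) -> Base X) i :
  (forall i i', (forall u, u < m -> i u = i' u) -> F i = F i') ->
  iterlim k p t m F i = F i.
Proof.
elim: t m i => [|t IH] m i hF //=.
have -> : (fun n => iterlim k p t m.+1 F (upd i m n)) = (fun _ => F i).
  apply: functional_extensionality => n; rewrite IH.
    apply: hF => u hu; rewrite /upd; case: eqP => // e; by rewrite e ltnn in hu.
  by move=> i1 i2 h; apply: hF => u hu; apply: h; apply: ltnW.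
exact: (@qlim_const _ (hpu m) X (F i)).
Qed.

Lemma iterlim_pad r t m (F : (nat -> nat) -> Base X) i :
  (forall i i', (forall u, u < m + r -> i u = i' u) -> F i = F i') ->
  iterlim k p (r + t) m F i = iterlim k p r m F i.
Proof.
elim: r m i => [|r IH] m i hF.
  by rewrite add0n iterlim_const //= => i1 i2 h; apply: hF => u; rewrite addn0; apply: h.
rewrite addSn /=; congr qlim; apply: functional_extensionality => n.
by apply: IH => i1 i2 h; apply: hF => u hu; apply: h; rewrite addSnnS.
Qed.

Lemma core r : forall m (i : nat -> nat) (Gs : list ((nat -> nat) -> Base X)) (L0 : nat) (eps : R),
  0 < m -> Rlt 0 eps ->
  exists i' : nat -> nat,
   (forall t, (t < m) || (m + r <= t) -> i' t = i t) /\
   (forall t, m <= t < m + r -> L0 < i' t /\ i' t %% k = t %% k /\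
        forall t', t < t' < m + r -> i' t < i' t') /\
   (forall G, List.In G Gs -> Rlt (dist X (G i') (iterlim k p r m G i)) eps).
Proof.
elim: r => [|r IH] m i Gs L0 eps hm he.
  exists i; split => //; split=> [t|G _]; first by rewrite addn0 => /andP[/leq_ltn_trans h /h]; rewrite ltnn.
  by have [_ ->] := dist_refl X (G i) (G i).
set j := pidx k m.
have hu := hpu m.
pose y (G : (nat -> nat) -> Base X) := iterlim k p r.+1 m G i.
have hS : p j (fun n => (L0 < n /\ n %% k = j %% k) /\ forall G, List.In G Gs ->
     Rlt (dist X (y G) (iterlim k p r m.+1 G (upd i m n))) (Rdiv eps 2)).
  apply: uf_and => //; first apply: uf_and => //.
  - by apply: uf_gt => //; exact: (proj2 (hp (pidx_rng m))).
  - exact: hres (pidx_rng m).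
  apply: uf_list => // G _.
  apply: (qlim_spec hu hX (x:=fun n => iterlim k p r m.+1 G (upd i m n)) (V:=fun z => Rlt (dist X (y G) z) (Rdiv eps 2))).
  exists (Rdiv eps 2); split; [lra|] => z h; exact: h.
have [n [[hn1 hn2] hn3]] := uf_nonempty hu hS.
have [i' [h1 [h2 h3]]] := IH m.+1 (upd i m n) Gs n (Rdiv eps 2) erefl ltac:(lra).
exists i'; split; [|split].
- move=> t ht; rewrite h1; last by lia.
  rewrite /upd; case: eqP => // e; exfalso; move: ht; rewrite e; lia.
- move=> t /andP[ht1 ht2].
  have hm' : i' m = n by rewrite h1 /upd ?eqxx //; lia.
  case: (ltngtP m t) ht1 => // [hlt|heq] _.
    have [a [b c]] := h2 t ltac:(lia).
    split; [lia|split=> //].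
    by move=> t' ht'; apply: c; lia.
  subst t; rewrite hm'; split=> //; split; first by rewrite hn2 pidx_mod.
  move=> t' ht'; by have [a _] := h2 t' ltac:(lia).
- move=> G hG.
  have a := h3 G hG; have b := hn3 G hG.
  have c := dist_tri X (G i') (y G) (iterlim k p r m.+1 G (upd i m n)).
  rewrite (dist_sym X (y G)) in b.
  change (Rlt (dist X (G i') (y G)) eps); lra.
Qed.
End Core.


Lemma smax_cons x s : smax (x :: s) = maxn x (smax s).
Proof. by rewrite /smax big_cons. Qed.

Lemma smax_ub x s : x \in s -> x <= smax s.
Proof.
elim: s => // y s IH; rewrite inE smax_cons => /orP[/eqP->|h].
  exact: leq_maxl.
by rewrite leq_max IH ?orbT.
Qed.

Lemma smax_in s : s != [::] -> smax s \in s.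
Proof.
elim: s => // y s IH _; rewrite smax_cons inE /maxn.
case: ltnP => h; last by rewrite eqxx.
case: s IH h => [|z s] IH h; first by rewrite /smax big_nil in h.
by rewrite IH ?orbT.
Qed.

Lemma smax_eq x s : x \in s -> (forall z, z \in s -> z <= x) -> x == smax s.
Proof.
move=> hx hz; rewrite eqn_leq smax_ub // hz //; apply: smax_in.
by case: s hx {hz}.
Qed.

Lemma canon_mem s x : (x \in canon s) = (0 < x) && (x \in s).
Proof.
rewrite /canon mem_filter mem_iota.
case hx: (x \in s); last by rewrite !andbF.
rewrite andbT /=; have := smax_ub hx; lia.
Qed.

Lemma canon_isF0 s : isF0 (canon s).
Proof.
apply/andP; split; first by apply: sorted_filter; [exact: ltn_trans | exact: iota_ltn_sorted].
by apply/allP => x; rewrite canon_mem => /andP[].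
Qed.

Lemma mod_gap k a b : 0 < k -> a < b -> a %% k = b %% k -> a + k <= b.
Proof.
move=> hk hab e.
have ha := divn_eq a k; have hb := divn_eq b k.
set qa := a %/ k in ha; set qb := b %/ k in hb.
have hq : qa < qb.
  rewrite ltnNge; apply/negP => h.
  have : qb * k <= qa * k by rewrite leq_mul2r h orbT.
  lia.
have : qa.+1 * k <= qb * k by rewrite leq_mul2r hq orbT.
rewrite mulSn; lia.
Qed.

Section Fam.
Variable k : nat.
Hypothesis hk : 0 < k.
Variable i : nat -> nat.
Hypothesis Hinc : forall t, 0 < t -> i t < i t.+1.
Hypothesis Hres : forall t, 0 < t -> i t %% k = t %% k.
Hypothesis Hpos : 0 < i 1.

Lemma mono_lt t t' : 0 < t -> t < t' -> i t < i t'.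
Proof.
move=> ht; elim: t' => // t' IH; rewrite ltnS leq_eqVlt => /orP[/eqP<-|h].
  exact: Hinc.
apply: ltn_trans (IH h) (Hinc _); lia.
Qed.

Lemma mono_le t t' : 0 < t -> t <= t' -> i t <= i t'.
Proof.
move=> ht; rewrite leq_eqVlt => /orP[/eqP<-//|h]; exact: ltnW (mono_lt ht h).
Qed.

Lemma res_jk j : 0 < j -> i (j + k) %% k = i j %% k.
Proof. move=> hj; rewrite Hres ?Hres //; [exact: modnDr | lia]. Qed.

Lemma mem_alphaj j x : 0 < j ->
  (x \in alphaj k i j) = [&& i j <= x, x %% k == i j %% k & x + k <= i (j + k)].
Proof.
move=> hj; rewrite /alphaj mem_filter mem_iota.
have h1 : i j < i (j + k) by apply: mono_lt; lia.
case: (leqP (i j) x) => h2 /=; last by rewrite !andbF.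
case: (x + k <= i (j + k)) /idP => h3; rewrite ?andbT ?andbF //.
have -> : (x < i j + (i (j + k) - i j)) = true by apply/idP; lia.
by rewrite andbT.
Qed.

Lemma ij_in j : 0 < j -> i j \in alphaj k i j.
Proof.
move=> hj; rewrite mem_alphaj // leqnn eqxx /=.
apply: mod_gap => //; first by apply: mono_lt; lia.
by rewrite res_jk.
Qed.

Lemma fam_isF j : 0 < j -> isF (alphaj k i j).
Proof.
move=> hj; apply/andP; split; last by have := ij_in hj; case: (alphaj k i j).
apply/andP; split; first by apply: sorted_filter; [exact: ltn_trans | exact: iota_ltn_sorted].
apply/allP => x; rewrite mem_alphaj // => /and3P[h _ _].
have := mono_le (isT : 0 < 1) hj; lia.
Qed.

Lemma fam_disj j j' : 0 < j -> 0 < j' -> j != j' ->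
  all (fun x => x \notin alphaj k i j') (alphaj k i j).
Proof.
move=> hj hj' hne; apply/allP => x; rewrite !mem_alphaj //.
move=> /and3P[a1 /eqP a2 a3]; apply/negP => /and3P[b1 /eqP b2 b3].
have hjj : j %% k = j' %% k by rewrite -Hres // -a2 b2 Hres.
case: (ltngtP j j') hne => // h _.
  have := mod_gap hk h hjj => h'.
  have := mono_le (_ : 0 < j + k) h'; lia.
have := mod_gap hk h (esym hjj) => h'.
have := mono_le (_ : 0 < j' + k) h'; lia.
Qed.

Lemma Sk_pres b : Sk k b -> Sk k (abeta (alphaj k i) b).
Proof.
move=> /andP[hb hball].
have bpos : forall j, j \in b -> 0 < j.
  by move=> j hj; case/andP: hb => /andP[_ /allP h] _; exact: h.
have memS : forall x, (exists2 j, j \in b & x \in alphaj k i j) -> x \in abeta (alphaj k i) b.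
  move=> x [j hj hx]; rewrite /abeta canon_mem; apply/andP; split.
    move: hx; rewrite mem_alphaj; last exact: bpos; move=> /and3P[h _ _].
    have := mono_le (isT : 0 < 1) (bpos j hj); lia.
  by apply/flatten_mapP; exists j.
have memS' : forall x, x \in abeta (alphaj k i) b -> exists2 j, j \in b & x \in alphaj k i j.
  move=> x; rewrite /abeta canon_mem => /andP[_ /flatten_mapP [j hj hx]]; by exists j.
apply/andP; split.
  rewrite /isF canon_isF0 /=.
  case/andP: hb => _; case: b bpos memS {hball memS'} => // j b bpos memS _.
  have := memS (i j) (ex_intro2 _ _ j (mem_head _ _) (ij_in (bpos j (mem_head _ _)))).
  by case: (abeta _ _).
apply/allP => x hx.
have [j hj hxj] := memS' x hx.
have hj0 := bpos j hj.
move: (hxj); rewrite mem_alphaj // => /and3P[x1 /eqP x2 x3].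
case: (leqP (x + k + k) (i (j + k))) => hcase.
  apply/orP; right; apply/hasP; exists (x + k); last by apply/andP; split; lia.
  apply: memS; exists j => //; rewrite mem_alphaj // hcase andbT.
  by rewrite modnDr x2 eqxx andbT; lia.
have hT : x + k = i (j + k).
  apply/eqP; rewrite eqn_leq x3 /=; rewrite leqNgt; apply/negP => hlt.
  have := mod_gap hk hlt; rewrite modnDr x2 res_jk // => /(_ erefl); lia.
have := allP hball j hj; case/orP => [/eqP hjmax | /hasP [j' hj' /andP[jj'1 jj'2]]].
  apply/orP; left; apply: smax_eq => // z /memS' [j'' hj'' hz].
  move: hz; rewrite mem_alphaj; last exact: bpos; move=> /and3P[_ _ z3].
  have := smax_ub hj''; rewrite -hjmax => hle.
  have := @mono_le (j'' + k) (j + k) ltac:(lia) ltac:(lia); lia.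
apply/orP; right.
have hj'0 := bpos j' hj'.
set T := i (j + k).
have hT1 : i j' <= T by apply: mono_le; lia.
set q := (T - i j') %/ k; set r := (T - i j') %% k.
have hd : T - i j' = q * k + r by apply: divn_eq.
have hr : r < k by apply: ltn_pmod.
have hyT : q * k + i j' <= T by lia.
have hT2 : T < i (j' + k) by apply: mono_lt; lia.
apply/hasP; exists (q * k + i j'); last by apply/andP; split; lia.
apply: memS; exists j' => //; rewrite mem_alphaj //.
rewrite modnMDl eqxx /=; apply/andP; split; first lia.
apply: mod_gap => //; first lia.
by rewrite modnMDl res_jk.
Qed.

Lemma fam_ok : subseq_family k k (alphaj k i).
Proof.
split; [exact: fam_isF | split; [exact: fam_disj | exact: Sk_pres]].
Qed.
End Fam.


Fixpoint allsub (s : seq nat) : list (seq nat) :=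
  match s with
  | [::] => [:: [::]]
  | x :: s' => List.app (allsub s') (List.map (cons x) (allsub s'))
  end.

Lemma allsub_in s t : subseq t s -> List.In t (allsub s).
Proof.
elim: s t => [|x s IH] t /=.
  by case: t => [_|y t //]; left.
case: t => [|y t] h.
  by apply: in_or_app; left; apply: IH; exact: sub0seq.
move: h => /=; case: (y =P x) => [-> h|_ h].
  by apply: in_or_app; right; apply: in_map; exact: IH.
by apply: in_or_app; left; exact: IH.
Qed.

Lemma b_sub b n : isF0 b -> smax b <= n -> subseq b (iota 1 n).
Proof.
move=> /andP[hs /allP hp] hn.
have e : [seq x <- iota 1 n | x \in b] = b.
  apply: (irr_sorted_eq ltn_trans ltnn) => //.
    by apply: sorted_filter; [exact: ltn_trans | exact: iota_ltn_sorted].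
  move=> x; rewrite mem_filter mem_iota.
  case hx: (x \in b) => //=; have := hp x hx; have := smax_ub hx; lia.
by rewrite -{1}e; exact: filter_subseq.
Qed.

Lemma Fdep (X : Metric_Space) (f : seq nat -> Base X) k b (i1 i2 : nat -> nat) :
  (forall u, u < 1 + (smax b + k) -> i1 u = i2 u) ->
  f (alphabeta k i1 b) = f (alphabeta k i2 b).
Proof.
move=> h; congr f; rewrite /alphabeta /abeta; congr canon; congr flatten.
apply/eq_in_map => j hj; rewrite /alphaj.
have hjb := smax_ub hj.
have e1 : i1 j = i2 j by apply: h; lia.
have e2 : i1 (j + k) = i2 (j + k) by apply: h; lia.
by rewrite e1 e2.
Qed.

Unset Implicit Arguments.
Theorem lemma3p2 (k : nat) (hk : 0 < k)
  (p : nat -> (nat -> Prop) -> Prop)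
  (hp : forall j, 1 <= j <= k -> nonprincipal_ultrafilter (p j))
  (hres : forall j, 1 <= j <= k -> p j (fun n => n %% k = j %% k))
  (X : Metric_Space) (hX : compact_space X)
  (f : seq nat -> Base X) :
  asymptotic_subseq k k f (ftilde k p f).
Proof.
pose Fb (b : seq nat) := fun i : nat -> nat => f (alphabeta k i b).
pose Gs n := List.map Fb (allsub (iota 1 n)).
have H := fun n => core hk hp hres hX (n + k) (m:=1) (fun _ => 0) (Gs n) 0 (eps:=Rinv (INR n.+1))
   erefl (Rinv_0_lt_compat _ (lt_0_INR _ (Nat.lt_0_succ n))).
pose g n := proj1_sig (constructive_indefinite_description _ (H n)).
have hg : forall n, _ := fun n => proj2_sig (constructive_indefinite_description _ (H n)).
pose I n t := if t <= n + k then g n t else g n (n + k) + (t - (n + k)).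
have hIg : forall n t, t <= n + k -> I n t = g n t.
  by move=> n t ht; rewrite /I ht.
exists (fun n => alphaj k (I n)); split.
  move=> n; have [_ [h2 _]] := hg n.
  apply: fam_ok => //.
  - move=> t ht; rewrite /I.
    case: (leqP t.+1 (n + k)) => h1.
      rewrite (ltnW h1); have [_ [_ c]] := h2 t ltac:(lia); apply: c; lia.
    case: (leqP t (n + k)) => h3; last by lia.
    have -> : t = n + k by lia.
    lia.
  - move=> t ht; rewrite /I; case: (leqP t (n + k)) => h1.
      by have [_ [c _]] := h2 t ltac:(lia).
    have [_ [c _]] := h2 (n + k) ltac:(lia).
    rewrite -modnDml c modnDml subnKC //; exact: ltnW.
  - rewrite hIg; last lia.
    by have [c _] := h2 1 ltac:(lia).
move=> b hb eps he.
have [N0 [hN0 hN0p]] := archimed_cor1 eps he.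
exists (maxn (smax b) N0) => n hn.
have [_ [_ h3]] := hg n.
have e1 : f (abeta (alphaj k (I n)) b) = Fb b (g n).
  change (f (alphabeta k (I n) b) = f (alphabeta k (g n) b)); apply: Fdep => u hu; apply: hIg; have := leq_maxl (smax b) N0; lia.
have e2 : iterlim k p (smax b + k + (n - smax b)) 1 (Fb b) (fun _ => 0) = ftilde k p f b.
  apply: (iterlim_pad hk hp) => i1 i2 h; apply: Fdep => u hu; apply: h; lia.
rewrite (_ : smax b + k + (n - smax b) = n + k) in e2; last by have := leq_maxl (smax b) N0; lia.
rewrite e1 -e2.
have hin : List.In (Fb b) (Gs n).
  apply: in_map; apply: allsub_in; apply: b_sub => //; have := leq_maxl (smax b) N0; lia.
have hd := h3 _ hin.
apply: Rlt_le_trans hd _.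
apply: Rlt_le; apply: Rle_lt_trans hN0.
apply: Rinv_le_contravar; first by apply: lt_0_INR.
apply: le_INR; apply/leP; have := leq_maxr (smax b) N0; lia.
Qed.
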